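(* Let $G$ be an $r$-regular graph with $k$ vertices, and for $d\ge 1$ let $G^d$ denote the join of $d$ identical copies of $G$. Then there exists a natural number $d_0$ such that for all $d\ge d_0$, $G^d$ is a Ramanujan graph.
   Context: All graphs are finite, simple and undirected. The join of graphs $G_1,\ldots,G_d$ is obtained from their disjoint union by adding an edge between every vertex of $G_i$ and every vertex of $G_j$ for all $i\ne j$. A connected $r$-regular graph with adjacency eigenvalues $\lambda_1\ge\cdots\ge\lambda_m$ (so $|\lambda_i|\le r$) is a Ramanujan graph if $\max_{|\lambda_i|<r}|\lambda_i|\le 2\sqrt{r-1}$. *)

(* Defs.v *)
From HB Require Import structures.
From mathcomp Require Import all_boot all_order all_algebra.
From mathcomp Require Import reals.
Set Implicit Arguments. Unset Strict Implicit. Unset Printing Implicit Defensive.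
Import Order.TTheory GRing.Theory Num.Theory.
Local Open Scope ring_scope.

Definition simple_graph (V : finType) (e : rel V) : Prop :=
  symmetric e /\ irreflexive e.

Definition regular (V : finType) (e : rel V) (r : nat) : Prop :=
  forall v : V, #|[set u | e v u]| = r.

Definition connected_graph (V : finType) (e : rel V) : Prop :=
  forall x y : V, connect e x y.

Definition adjmx (R : realType) (V : finType) (e : rel V) : 'M[R]_#|V| :=
  \matrix_(i, j) ((e (enum_val i) (enum_val j))%:R : R).

(* Connected r-regular graph whose eigenvalues lambda with |lambda| < r
   satisfy |lambda| <= 2 sqrt(r-1).  (Adjacency matrices are real symmetric,
   so all their eigenvalues lie in R.) *)
Definition ramanujan (R : realType) (V : finType) (e : rel V) (r : nat) : Prop :=
  connected_graph e /\ regular e r /\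
  forall lam : R, eigenvalue (adjmx R e) lam ->
    `|lam| < r%:R -> `|lam| <= 2 * Num.sqrt (r%:R - 1).

Definition join_copies (V : finType) (e : rel V) (d : nat) : rel ('I_d * V)%type :=
  fun x y => ((x.1 == y.1) && e x.2 y.2) || (x.1 != y.1).
Arguments join_copies {V} e d.

(* Main.v *)
Require Import Defs.
From mathcomp Require Import all_boot all_order all_algebra.
From mathcomp Require Import reals ring lra zify.
Set Implicit Arguments. Unset Strict Implicit. Unset Printing Implicit Defensive.
Import Order.TTheory GRing.Theory Num.Theory.
Local Open Scope ring_scope.

Lemma sum_ind (R : realType) (V : finType) (e : rel V) (r : nat) w :
  regular e r -> \sum_(u : V) ((e w u)%:R : R) = r%:R.
Proof.
move=> Hr; rewrite -(Hr w) -natr_sum; congr (_%:R).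
rewrite -sum1_card [RHS]big_mkcond /=. 
apply: eq_bigr => u _.
by rewrite inE; case: (e w u).
Qed.

Lemma key_eig (R : realType) (V : finType) (e : rel V) (r d : nat)
  (f : 'I_d * V -> R) (lam : R) :
  symmetric e -> regular e r ->
  (forall x, lam * f x = \sum_y f y * (join_copies e d y x)%:R) ->
  (exists x, f x != 0) ->
  lam = (r + d.-1 * #|V|)%:R \/ `|lam| <= #|V|%:R.
Proof.
move=> Hsym Hr Hf [x0 Hx0].
pose S i := \sum_(w : V) f (i, w).
pose Sall := \sum_(i : 'I_d) S i.
have Hx : forall i u, lam * f (i, u) =
    \sum_(w : V) f (i, w) * (e w u)%:R + (Sall - S i).
  move=> i u; rewrite Hf.
  rewrite (eq_bigr (fun y => f (y.1, y.2) * (join_copies e d (y.1, y.2) (i, u))%:R));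
    last by case.
  rewrite -(pair_bigA _ (fun j w => f (j, w) * (join_copies e d (j, w) (i, u))%:R)) /=.
  rewrite (bigD1 i) //= /Sall [in RHS](bigD1 i) //=.
  rewrite [X in _ + (X - _)]addrC addrK; congr (_ + _).
    by apply: eq_bigr => w _; rewrite /join_copies /= eqxx /= orbF.
  apply: eq_bigr => j hj; apply: eq_bigr => w _.
  by rewrite /join_copies /= (negbTE hj) /= mulr1.
have HSi : forall i, lam * S i = r%:R * S i + #|V|%:R * (Sall - S i).
  move=> i.
  have -> : lam * S i = \sum_u lam * f (i, u) by rewrite mulr_sumr.
  rewrite (eq_bigr _ (fun u _ => Hx i u)) big_split /= sumr_const exchange_big /=.
  rewrite (eq_bigr (fun w => f (i,w) * r%:R)) => [|w _]; last by rewrite -mulr_sumr (@sum_ind R _ e r w Hr).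
  by rewrite -mulr_suml mulrC -[(_ - _) *+ _]mulr_natl.
have HS : lam * Sall = r%:R * Sall + #|V|%:R * (d%:R * Sall - Sall).
  rewrite {1}/Sall mulr_sumr (eq_bigr _ (fun i _ => HSi i)) big_split /=.
  by rewrite -!mulr_sumr sumrB sumr_const card_ord -[Sall *+ _]mulr_natl.
have d0 : (0 < d)%N by apply: leq_ltn_trans (leq0n _) (ltn_ord x0.1).
case: (eqVneq lam (r + d.-1 * #|V|)%:R) => [->|Hne]; first by left.
right.
have HS0 : Sall = 0.
  have : (lam - (r + d.-1 * #|V|)%:R) * Sall = 0.
    by rewrite mulrBl HS natrD natrM -subn1 natrB //; ring.
  by move/eqP; rewrite mulf_eq0 subr_eq0 (negbTE Hne) /= => /eqP.
have rk : (r <= #|V|)%N by rewrite -(Hr x0.2) max_card.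
have HSi0: forall i, (lam - (r%:R - #|V|%:R)) * S i = 0.
  by move=> i; rewrite mulrBl HSi HS0; ring.
case: (eqVneq lam (r%:R - #|V|%:R)) => [->|Hne2].
  have h1 : (r%:R:R) <= #|V|%:R by rewrite ler_nat.
  have h2 : 0 <= (r%:R:R) by rewrite ler0n.
  rewrite ler_norml; apply/andP; split; lra.
have Si0 : forall i, S i = 0.
  move=> i; apply/eqP; move: (HSi0 i) => /eqP.
  by rewrite mulf_eq0 subr_eq0 (negbTE Hne2).
have Hx' : forall i u, lam * f (i,u) = \sum_w f (i,w) * (e w u)%:R.
  by move=> i u; rewrite Hx Si0 HS0 subr0 addr0.
set m := [arg max_(x > x0) `|f x|]%O.
have Hm : forall x, `|f x| <= `|f m|.
  by move=> x; rewrite /m; case: arg_maxP => // j _ Hj; apply: Hj.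
have fm : 0 < `|f m| by apply: lt_le_trans (Hm x0); rewrite normr_gt0.
have : `|lam| * `|f m| <= r%:R * `|f m|.
  have E := Hx' m.1 m.2; rewrite -surjective_pairing in E.
  rewrite -normrM E.
  apply: le_trans (ler_norm_sum _ _ _) _.
  rewrite -(@sum_ind R _ e r m.2 Hr) mulr_suml; apply: ler_sum => w _.
  rewrite normrM normr_nat (Hsym w m.2) mulrC.
  by apply: ler_wpM2l; [rewrite ler0n | apply: Hm].
rewrite (ler_pM2r fm) => h; apply: le_trans h _.
by rewrite ler_nat.
Qed.

Lemma join_regular (V : finType) (e : rel V) (r d : nat) :
  regular e r -> regular (join_copies e d) (r + d.-1 * #|V|).
Proof.
move=> Hr x.
have -> : [set y | join_copies e d x y] =
   [set (x.1, w) | w in [set w | e x.2 w]] :|: setX [set~ x.1] setT.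
  apply/setP => [[j w]]; rewrite !inE /join_copies /=.
  case: eqP => [<-|hne] /=.
    rewrite eqxx /= !orbF; apply/idP/idP.
      by move=> h; apply/imsetP; exists w; rewrite ?inE.
    by case/imsetP => w' ; rewrite inE => h [->].
  rewrite andbT; apply/esym/orP; right; apply/eqP => h; exact: hne (esym h).
have HI : [set (x.1, w) | w in [set w | e x.2 w]] :&: setX [set~ x.1] setT = set0.
  apply/setP => [[j w]]; rewrite !inE; apply/negP => /andP [/imsetP [w' _ [-> _]]].
  by rewrite /= eqxx.
have := cardsUI ([set (x.1, w) | w in [set w | e x.2 w]]) (setX [set~ x.1] setT).
rewrite HI cards0 addn0 => ->.
rewrite card_imset; last by move=> a b [].
by rewrite Hr cardsX cardsC1 card_ord cardsT.
Qed.

Lemma join_connected (V : finType) (e : rel V) (d : nat) :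
  (2 <= d)%N -> connected_graph (join_copies e d).
Proof.
move=> d2 x y.
case: (eqVneq x.1 y.1) => [h|h].
  have : (0 < #|[set~ x.1]|)%N by rewrite cardsC1 card_ord -subn1 subn_gt0.
  case/card_gt0P => j; rewrite !inE => hj.
  apply: (connect_trans (y := (j, x.2))); apply: connect1;
    rewrite /join_copies /= ?hj ?orbT //.
    by rewrite eq_sym hj orbT.
  by rewrite -h hj orbT.
by apply: connect1; rewrite /join_copies /= h orbT.
Qed.

Unset Implicit Arguments.
Theorem mainTheorem6 (R : realType) (V : finType) (e : rel V) (r k : nat) :
  simple_graph e -> regular e r -> #|V| = k -> (0 < k)%N ->
  exists d0 : nat, forall d : nat, (1 <= d)%N -> (d0 <= d)%N ->
    exists r' : nat, @ramanujan R _ (join_copies e d) r'.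
Proof.
move=> [Hsym _] Hr Hk k0; exists (k + 3)%N => d _ hd.
exists (r + d.-1 * #|V|)%N; split; first by apply: join_connected; lia.
split; first exact: join_regular.
move=> lam /eigenvalueP [v Hv vnz] Hlt.
pose f (y : 'I_d * V) := v 0 (enum_rank y).
have Hf : forall x, lam * f x = \sum_y f y * (join_copies e d y x)%:R.
  move=> x.
  move/rowP: Hv => /(_ (enum_rank x)); rewrite !mxE => <-.
  rewrite (reindex enum_rank) /=; last by apply: onW_bij; exact: enum_rank_bij.
  by apply: eq_bigr => y _; rewrite mxE !enum_rankK.
have [x Hx] : exists x, f x != 0.
  case: (boolP [exists x, f x != 0]) => [/existsP //|/existsPn H].
  case/eqP: vnz; apply/rowP => j; rewrite !mxE.
  by have := H (enum_val j); rewrite /f enum_valK negbK => /eqP.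
case: (key_eig Hsym Hr Hf (ex_intro _ x Hx)) => [Hl|Hl].
  by rewrite Hl ger0_norm ?ltxx ?ler0n in Hlt.
apply: (le_trans Hl).
have H1 : (k ^ 2 + 1 <= r + d.-1 * k)%N by nia.
have H2 : (k%:R : R) ^+ 2 <= (r + d.-1 * #|V|)%:R - 1.
  rewrite Hk lerBrDr -natrX natr1 ler_nat; lia.
have H3 : (k%:R : R) <= Num.sqrt ((r + d.-1 * #|V|)%:R - 1).
  have H0 := le_trans (sqr_ge0 _) H2.
  by move: H2; rewrite -(ler_sqrt _ H0) sqrtr_sqr ger0_norm ?ler0n.
have H4 := sqrtr_ge0 ((r + d.-1 * #|V|)%:R - 1 : R).
move: H3; rewrite -Hk => H3.
lra.
Qed.
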